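(* Let $k\ge 2$ be even, let $\mathscr{A}\in\mathbb{R}^{n\times n\times\cdots\times n}$ be a $k$th-order $n$-dimensional tensor and $\mathbf{B}\in\mathbb{R}^{n\times m}$, and consider the system $\dot{\mathbf{x}}(t)=\mathscr{A}\mathbf{x}(t)^{k-1}+\mathbf{B}\mathbf{u}(t)$. (i) If the pair $(\mathscr{A},\mathbf{B})$ is controllable, then there exists $\varepsilon>0$ such that every pair $(\tilde{\mathscr{A}},\tilde{\mathbf{B}})$ (of the same sizes) with $\|\tilde{\mathscr{A}}-\mathscr{A}\|<\varepsilon$ and $\|\tilde{\mathbf{B}}-\mathbf{B}\|<\varepsilon$ is also controllable. (ii) If $(\mathscr{A},\mathbf{B})$ is not controllable, then for every $\varepsilon>0$ there exists a controllable pair $(\tilde{\mathscr{A}},\tilde{\mathbf{B}})$ with $\|\tilde{\mathscr{A}}-\mathscr{A}\|<\varepsilon$ and $\|\tilde{\mathbf{B}}-\mathbf{B}\|<\varepsilon$.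
   Context: For a $k$th-order tensor $\mathscr{A}$ and vectors $\mathbf{v}_1,\dots,\mathbf{v}_{k-1}\in\mathbb{R}^n$, $\mathscr{A}\mathbf{v}_1\mathbf{v}_2\cdots\mathbf{v}_{k-1}\in\mathbb{R}^n$ denotes the vector with entries $\sum_{j_2,\dots,j_k}\mathscr{A}_{i j_2\cdots j_k}(\mathbf{v}_1)_{j_2}\cdots(\mathbf{v}_{k-1})_{j_k}$, and $\mathscr{A}\mathbf{x}^{k-1}$ is this with all $\mathbf{v}_i=\mathbf{x}$. Norms are standard (e.g. Frobenius) norms on tensors and matrices. The nonlinear controllability matrix of $(\mathscr{A},\mathbf{B})$ is $\mathbf{C}=[\mathbf{M}_0\ \mathbf{M}_1\ \cdots\ \mathbf{M}_{n-1}]$, where $\mathbf{M}_0=\mathbf{B}$ and, for $j=1,\dots,n-1$, the columns of $\mathbf{M}_j$ are formed from the set $\{\mathscr{A}\mathbf{v}_1\mathbf{v}_2\cdots\mathbf{v}_{k-1} : \mathbf{v}_i\in\operatorname{span}[\mathbf{M}_0\ \cdots\ \mathbf{M}_{j-1}],\ i=1,\dots,k-1\}$ (so that the column span of $\mathbf{C}$ equals the span of all such vectors generated iteratively). The pair $(\mathscr{A},\mathbf{B})$ (equivalently the system) is called controllable (strongly controllable) if $\operatorname{rank}\mathbf{C}=n$. *)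

(* Defs.v *)
From HB Require Import structures.
From mathcomp Require Import all_boot all_order all_algebra.
From mathcomp Require Import reals.
Set Implicit Arguments. Unset Strict Implicit. Unset Printing Implicit Defensive.
Import Order.TTheory GRing.Theory Num.Theory.
Local Open Scope ring_scope.

(* A k-th order n-dimensional real tensor: entry  A i j  with i the first
   index and j : 'I_k.-1 -> 'I_n the remaining k-1 indices (j_2,...,j_k). *)
Definition tensor (R : Type) (k n : nat) :=
  'I_n -> {ffun 'I_k.-1 -> 'I_n} -> R.

Definition tapp (R : ringType) (k n : nat) (A : tensor R k n)
  (v : 'I_k.-1 -> 'rV[R]_n) : 'rV[R]_n :=
  \row_i \sum_(j : {ffun 'I_k.-1 -> 'I_n}) A i j * \prod_(l < k.-1) v l 0 (j l).

(* Row-space (as a square matrix, mxalgebra) of span[M_0 ... M_j] of the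
   nonlinear controllability matrix. *)
Fixpoint ctrl_space (R : fieldType) (k n m : nat) (A : tensor R k n)
  (B : 'M[R]_(n, m)) (j : nat) : 'M[R]_n :=
  match j with
  | 0 => <<B^T>>%MS
  | j'.+1 =>
      let W := ctrl_space A B j' in
      (W + \sum_(t : {ffun 'I_k.-1 -> 'I_n})
              <<tapp A (fun l => row (t l) W)>>)%MS
  end.

Definition controllable (R : fieldType) (k n m : nat) (A : tensor R k n)
  (B : 'M[R]_(n, m)) : Prop :=
  \rank (ctrl_space A B n.-1) = n.

Definition tensor_dist (R : rcfType) (k n : nat) (A1 A2 : tensor R k n) : R :=
  Num.sqrt (\sum_(i < n) \sum_(j : {ffun 'I_k.-1 -> 'I_n}) (A1 i j - A2 i j) ^+ 2).

Definition mx_dist (R : rcfType) (n m : nat) (B1 B2 : 'M[R]_(n, m)) : R :=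
  Num.sqrt (\sum_(i < n) \sum_(j < m) (B1 i j - B2 i j) ^+ 2).

(* Main.v *)
Require Import Defs.
From HB Require Import structures.
From mathcomp Require Import all_boot all_order all_algebra.
From mathcomp Require Import reals.
From mathcomp Require Import ring lra.
From mathcomp Require Import fingroup perm.
Set Implicit Arguments. Unset Strict Implicit. Unset Printing Implicit Defensive.
Import Order.TTheory GRing.Theory Num.Theory.
Local Open Scope ring_scope.

Inductive tree (m p : nat) := Leaf of 'I_m | Node of ('I_p -> tree m p).
Arguments Leaf {m p}. Arguments Node {m p}.

Fixpoint eval (R : comNzRingType) k n m (A : tensor R k n) (B : 'M[R]_(n, m))
  (t : tree m k.-1) : 'rV[R]_n :=
  match t with
  | Leaf i => (col i B)^T
  | Node f => tapp A (fun l => eval A B (f l))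
  end.

Fixpoint dle m p (t : tree m p) (j : nat) : Prop :=
  match t with
  | Leaf _ => True
  | Node f => match j with 0 => False | j'.+1 => forall l, dle (f l) j' end
  end.

Lemma dle_S m p (t : tree m p) j : dle t j -> dle t j.+1.
Proof. by elim: t j => [//|f IH] [|j] //= H l; apply: IH. Qed.

Lemma dle_le m p (t : tree m p) j j' : (j <= j')%N -> dle t j -> dle t j'.
Proof.
move=> /subnK <-; elim: (j' - j)%N => [//|d IH] H; rewrite addSn; exact/dle_S/IH.
Qed.

Section TappLemmas.
Variables (R : comNzRingType) (k n : nat) (A : tensor R k n).

Lemma tapp_ext (v w : 'I_k.-1 -> 'rV[R]_n) :
  (forall l, v l = w l) -> tapp A v = tapp A w.
Proof.
move=> H; apply/rowP => i; rewrite !mxE; apply: eq_bigr => j _.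
by congr (_ * _); apply: eq_bigr => l _; rewrite H.
Qed.

Definition upd (v : 'I_k.-1 -> 'rV[R]_n) c x :=
  fun l => if l == c then x else v l.

Lemma tapp_upd_lin (v : 'I_k.-1 -> 'rV[R]_n) c N (a : 'I_N -> R) w :
  tapp A (upd v c (\sum_(i < N) a i *: w i)) =
  \sum_(i < N) a i *: tapp A (upd v c (w i)).
Proof.
apply/rowP => r; rewrite !mxE summxE.
transitivity (\sum_j \sum_(i < N) a i * (A r j * (w i 0 (j c) *
                 \prod_(l | l != c) v l 0 (j l)))).
  apply: eq_bigr => j _; rewrite (bigD1 c) //= {1}/upd eqxx summxE.
  rewrite (eq_bigr (fun l => v l 0 (j l))); last first.
    by move=> l /negbTE hl; rewrite /upd hl.
  rewrite mulr_suml mulr_sumr; apply: eq_bigr => i _; rewrite mxE.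
  by rewrite !mulrA [A r j * a i]mulrC.
rewrite exchange_big; apply: eq_bigr => i _; rewrite !mxE mulr_sumr.
apply: eq_bigr => j _; congr (_ * (_ * _)).
rewrite [in RHS](bigD1 c) //= {1}/upd eqxx; congr (_ * _).
by apply: eq_bigr => l /negbTE hl; rewrite /upd hl.
Qed.

End TappLemmas.
Arguments tapp_ext {R k n A v} w.

Lemma tapp_span (F : fieldType) k n p (A : tensor F k n) (X : 'M[F]_(p, n))
  (P : 'rV[F]_n -> Prop) :
  P 0 -> (forall u w, P u -> P w -> P (u + w)) ->
  (forall a u, P u -> P (a *: u)) ->
  (forall g : 'I_k.-1 -> 'I_p, P (tapp A (fun l => row (g l) X))) ->
  forall v, (forall l, (v l <= X)%MS) -> P (tapp A v).
Proof.
move=> P0 PD PZ Pg.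
have key : forall c v, (forall l, (v l <= X)%MS) ->
    (forall l : 'I_k.-1, (c <= l)%N -> exists i, v l = row i X) -> P (tapp A v).
  elim=> [|c IH] v Hv Hc.
    have [g Hg] := fin_all_exists (fun l => Hc l (leq0n _)).
    by rewrite (tapp_ext (fun l => row (g l) X)).
  case: (ltnP c k.-1) => hc; last first.
    apply: IH => // l hl; exfalso; move: (ltn_ord l); rewrite ltnNge.
    by rewrite (leq_trans hc hl).
  set c' := Ordinal hc.
  rewrite (tapp_ext (upd v c' (v c'))); last first.
    by move=> l; rewrite /upd; case: eqP => // ->.
  have [x ->] := submxP (Hv c'); rewrite mulmx_sum_row tapp_upd_lin.
  apply: (big_ind P) => // i _; apply: PZ; apply: IH.
    by move=> l; rewrite /upd; case: eqP => _ //; exact: row_sub.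
  move=> l hl; rewrite /upd; case: eqP => [_|hne]; first by exists i.
  apply: Hc; rewrite ltn_neqAle hl andbT; apply/eqP => he; apply: hne.
  exact: val_inj.
move=> v Hv; apply: (key k.-1) => // l; by rewrite leqNgt ltn_ord.
Qed.

Section Ctrl.
Variables (F : fieldType) (k n m : nat) (A : tensor F k n) (B : 'M[F]_(n, m)).

Lemma ctrl_space_S j : (ctrl_space A B j <= ctrl_space A B j.+1)%MS.
Proof. exact: addsmxSl. Qed.

Lemma eval_sub (t : tree m k.-1) j : dle t j -> (eval A B t <= ctrl_space A B j)%MS.
Proof.
elim: t j => [i|f IH] j /=.
  move=> _; elim: j => [|j IHj]; first by rewrite /= genmxE tr_col row_sub.
  exact: submx_trans IHj (ctrl_space_S j).
case: j => [//|j] H.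
apply: (tapp_span (P := fun v => (v <= ctrl_space A B j.+1)%MS)).
- exact: sub0mx.
- by move=> u w hu hw; rewrite addmx_sub.
- by move=> a u hu; rewrite scalemx_sub.
- move=> g; rewrite /=; apply: submx_trans (addsmxSr _ _).
  apply: (sumsmx_sup [ffun l => g l]) => //; rewrite genmxE.
  by rewrite (tapp_ext (fun l => row ([ffun l => g l] l) (ctrl_space A B j))) // => l; rewrite ffunE.
- by move=> l; apply: IH.
Qed.

Variable i0 : 'I_m.

Definition Mof N (T : nat -> tree m k.-1) : 'M[F]_(N, n) :=
  \matrix_(i < N) eval A B (T i).

Definition Sp j p (X : 'M[F]_(p, n)) := exists N T,
  (forall i, dle (T i) j) /\ (X <= Mof N T)%MS.

Lemma eval_Mof N T i : (i < N)%N -> (eval A B (T i) <= Mof N T)%MS.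
Proof.
move=> h; rewrite (_ : eval A B (T i) = row (Ordinal h) (Mof N T)).
  exact: row_sub.
by rewrite rowK.
Qed.

Lemma Sp_join j p1 p2 (X : 'M_(p1, n)) (Y : 'M_(p2, n)) : Sp j X -> Sp j Y ->
  exists N T, (forall i, dle (T i) j) /\ (X <= Mof N T)%MS /\ (Y <= Mof N T)%MS.
Proof.
move=> [N1 [T1 [H1 S1]]] [N2 [T2 [H2 S2]]].
exists (N1 + N2)%N, (fun i => if (i < N1)%N then T1 i else T2 (i - N1)%N).
split; first by move=> i; case: ifP.
split.
  apply: submx_trans S1 _; apply/row_subP => i; rewrite rowK.
  have h : (i < N1 + N2)%N by rewrite ltn_addr.
  by have := eval_Mof (fun i => if (i < N1)%N then T1 i else T2 (i - N1)%N) h; rewrite ltn_ord.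
apply: submx_trans S2 _; apply/row_subP => i; rewrite rowK.
have h : (N1 + i < N1 + N2)%N by rewrite ltn_add2l.
have := eval_Mof (fun i => if (i < N1)%N then T1 i else T2 (i - N1)%N) h.
by rewrite ltnNge leq_addr /= addKn.
Qed.

Lemma Sp0 j p : Sp j (0 : 'M_(p, n)).
Proof. by exists 0%N, (fun _ => Leaf i0); split => //; exact: sub0mx. Qed.

Lemma Sp_adds j p1 p2 (X : 'M_(p1, n)) (Y : 'M_(p2, n)) :
  Sp j X -> Sp j Y -> Sp j (X + Y)%MS.
Proof.
move=> hX hY; have [N [T [H [s1 s2]]]] := Sp_join hX hY.
by exists N, T; split => //; rewrite addsmx_sub s1.
Qed.

Lemma Sp_add j (X Y : 'M_(1, n)) : Sp j X -> Sp j Y -> Sp j (X + Y).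
Proof.
move=> hX hY; have [N [T [H [s1 s2]]]] := Sp_join hX hY.
by exists N, T; split => //; rewrite addmx_sub.
Qed.

Lemma Sp_scale j a (X : 'M_(1, n)) : Sp j X -> Sp j (a *: X).
Proof. by move=> [N [T [H s]]]; exists N, T; split => //; rewrite scalemx_sub. Qed.

Lemma Sp_gen j p (X : 'M_(p, n)) : Sp j X -> Sp j <<X>>%MS.
Proof. by move=> [N [T [H s]]]; exists N, T; split => //; rewrite genmxE. Qed.

Lemma Sp_S j p (X : 'M_(p, n)) : Sp j X -> Sp j.+1 X.
Proof. by move=> [N [T [H s]]]; exists N, T; split => // i; apply: dle_S. Qed.

Lemma ctrl_Sp j : Sp j (ctrl_space A B j).
Proof.
elim: j => [|j IH].
  exists m, (fun i => Leaf (insubd i0 i)); split => //.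
  rewrite /= genmxE; apply/row_subP => i; rewrite -tr_col.
  by have := eval_Mof (fun i => Leaf (insubd i0 i)) (ltn_ord i); rewrite /= valKd.
rewrite /=; apply: Sp_adds; first exact: Sp_S.
apply: (big_ind (fun X : 'M_n => Sp j.+1 X)); first exact: Sp0.
  by move=> X Y; apply: Sp_adds.
move=> t _; apply: Sp_gen.
have [N [T [HT sW]]] := IH.
apply: (tapp_span (X := Mof N T) (P := fun v => Sp j.+1 v)).
- exact: Sp0.
- exact: Sp_add.
- exact: Sp_scale.
- move=> g; pose T' := fun i : nat => Node (fun l : 'I_k.-1 => T (g l)).
  exists 1%N, T'; split => //.
  move=> i; rewrite /T' /= => l; exact: HT.
  rewrite (tapp_ext (fun l => eval A B (T (g l)))) => [|l]; last by rewrite rowK.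
  exact: (eval_Mof T' (ltn0Sn 0)).
- by move=> l; apply: submx_trans sW; apply: row_sub.
Qed.

Lemma ctrl_of_trees (T : 'I_n -> tree m k.-1) :
  (forall i, dle (T i) n.-1) -> \det (\matrix_(i < n) eval A B (T i)) != 0 ->
  controllable A B.
Proof.
move=> HT hdet; rewrite /controllable.
have hu : (\matrix_(i < n) eval A B (T i)) \in unitmx by rewrite unitmxE unitfE.
apply/eqP; rewrite eqn_leq rank_leq_col -{1}(mxrank_unit hu) mxrankS //.
by apply/row_subP => i; rewrite rowK; apply: eval_sub.
Qed.

End Ctrl.

Section Cont.
Variables (R : realType) (k n m : nat) (A0 : tensor R k n) (B0 : 'M[R]_(n, m)).

Definition cont (F : tensor R k n -> 'M[R]_(n, m) -> R) :=
  forall e : R, 0 < e -> exists2 d : R, 0 < d & forall A B,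
    tensor_dist A A0 < d -> mx_dist B B0 < d -> `|F A B - F A0 B0| < e.

Lemma cont_ext F G : (forall A B, F A B = G A B) -> cont F -> cont G.
Proof.
move=> H hF e he; have [d hd Hd] := hF e he; exists d => // A B h1 h2.
by rewrite -!H; exact: Hd.
Qed.

Lemma cont_const c : cont (fun _ _ => c).
Proof. by move=> e he; exists 1 => // A B _ _; rewrite subrr normr0. Qed.

Lemma cont_add F G : cont F -> cont G -> cont (fun A B => F A B + G A B).
Proof.
move=> hF hG e he.
have he2 : 0 < e / 2 by rewrite divr_gt0.
have [d1 hd1 H1] := hF _ he2; have [d2 hd2 H2] := hG _ he2.
exists (Num.min d1 d2); first by rewrite lt_min hd1 hd2.
move=> A B; rewrite !lt_min => /andP[a1 a2] /andP[b1 b2].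
have := H1 A B a1 b1; have := H2 A B a2 b2.
have -> : F A B + G A B - (F A0 B0 + G A0 B0) =
          (F A B - F A0 B0) + (G A B - G A0 B0) by ring.
move=> h2 h1; apply: le_lt_trans (ler_normD _ _) _.
by rewrite [e](splitr e) ltrD.
Qed.

Lemma cont_mul F G : cont F -> cont G -> cont (fun A B => F A B * G A B).
Proof.
move=> hF hG e he.
set M := `|F A0 B0| + `|G A0 B0| + 1.
have hM : 0 < M by rewrite ltr_pwDr // addr_ge0.
set a := Num.min 1 (e / M).
have ha : 0 < a by rewrite lt_min ltr01 divr_gt0.
have ha1 : a <= 1 by rewrite ge_min lexx.
have haM : a * M <= e.
  by rewrite -ler_pdivlMr // ge_min lexx orbT.
have [d1 hd1 H1] := hF _ ha; have [d2 hd2 H2] := hG _ ha.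
exists (Num.min d1 d2); first by rewrite lt_min hd1 hd2.
move=> A B; rewrite !lt_min => /andP[a1 a2] /andP[b1 b2].
have := H1 A B a1 b1; have := H2 A B a2 b2.
set x := F A B - F A0 B0; set y := G A B - G A0 B0.
have -> : F A B * G A B - F A0 B0 * G A0 B0 =
   x * y + F A0 B0 * y + x * G A0 B0 by rewrite /x /y; ring.
move=> hy hx.
apply: le_lt_trans (ler_normD _ _) _.
apply: le_lt_trans (lerD (ler_normD _ _) (lexx _)) _.
rewrite !normrM.
have hx0 := normr_ge0 x; have hy0 := normr_ge0 y.
have hF0 := normr_ge0 (F A0 B0); have hG0 := normr_ge0 (G A0 B0).
move: haM; rewrite /M => haM.
nra.
Qed.

Lemma cont_sum (I : Type) (r : seq I) (P : pred I) (F : I -> tensor R k n -> 'M[R]_(n, m) -> R) :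
  (forall i, cont (F i)) -> cont (fun A B => \sum_(i <- r | P i) F i A B).
Proof.
move=> hF; elim: r => [|i r IH].
  by apply: cont_ext (cont_const 0) => A B; rewrite big_nil.
case hP: (P i).
  apply: cont_ext (cont_add (hF i) IH) => A B; by rewrite big_cons hP.
by apply: cont_ext IH => A B; rewrite big_cons hP.
Qed.

Lemma cont_prod (I : Type) (r : seq I) (P : pred I) (F : I -> tensor R k n -> 'M[R]_(n, m) -> R) :
  (forall i, cont (F i)) -> cont (fun A B => \prod_(i <- r | P i) F i A B).
Proof.
move=> hF; elim: r => [|i r IH].
  by apply: cont_ext (cont_const 1) => A B; rewrite big_nil.
case hP: (P i).
  apply: cont_ext (cont_mul (hF i) IH) => A B; by rewrite big_cons hP.
by apply: cont_ext IH => A B; rewrite big_cons hP.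
Qed.

Lemma le_sqrt_sum (I J : finType) (f : I -> J -> R) i j :
  `|f i j| <= Num.sqrt (\sum_i \sum_j f i j ^+ 2).
Proof.
rewrite -sqrtr_sqr ler_sqrt; last by apply: sumr_ge0 => *; apply: sumr_ge0 => *; exact: sqr_ge0.
rewrite (bigD1 i) //= (bigD1 j) //= -addrA lerDl addr_ge0 //.
  by apply: sumr_ge0 => *; exact: sqr_ge0.
by apply: sumr_ge0 => *; apply: sumr_ge0 => *; exact: sqr_ge0.
Qed.

Lemma cont_A i j : cont (fun A _ => A i j).
Proof.
move=> e he; exists e => // A B h _; apply: le_lt_trans h.
exact: (le_sqrt_sum (fun i j => A i j - A0 i j)).
Qed.

Lemma cont_B i j : cont (fun _ B => B i j).
Proof.
move=> e he; exists e => // A B _ h; apply: le_lt_trans h.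
exact: (le_sqrt_sum (fun (i : 'I_n) (j : 'I_m) => B i j - B0 i j)).
Qed.

Lemma cont_eval (t : tree m k.-1) r : cont (fun A B => eval A B t 0 r).
Proof.
elim: t r => [i|f IH] r.
  by apply: cont_ext (cont_B r i) => A B; rewrite !mxE.
apply: cont_ext (cont_sum _ _ (fun j => cont_mul (cont_A r j)
   (cont_prod _ _ (fun l => IH l (j l))))) => A B.
by rewrite /= mxE.
Qed.

Lemma cont_det (T : 'I_n -> tree m k.-1) :
  cont (fun A B => \det (\matrix_(i < n) eval A B (T i))).
Proof.
apply: cont_ext (cont_sum _ _ (fun s : 'S_n => cont_mul (cont_const ((-1) ^+ s))
   (cont_prod _ _ (fun i => cont_eval (T i) (s i))))) => A B.
by rewrite /determinant; apply: eq_bigr => s _; congr (_ * _); apply: eq_bigr => i _; rewrite mxE.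
Qed.

End Cont.

Lemma part1 (R : realType) (k n m : nat) (hm : (0 < m)%N)
  (A : tensor R k n) (B : 'M[R]_(n, m)) :
  controllable A B ->
     exists eps : R, 0 < eps /\
       forall (At : tensor R k n) (Bt : 'M[R]_(n, m)),
         tensor_dist At A < eps -> mx_dist Bt B < eps -> controllable At Bt.
Proof.
move=> hc; pose i0 := Ordinal hm.
have [N [T [HT sW]]] := ctrl_Sp A B i0 n.-1.
have hfull : row_full (Mof A B N T).
  rewrite /row_full eqn_leq rank_leq_col /=; rewrite -{1}hc; exact: mxrankS.
pose f := fullrankfun hfull.
have hu := fullrowsub_unit hfull.
pose T' := fun i : 'I_n => T (f i).
have Heq : rowsub f (Mof A B N T) = \matrix_(i < n) eval A B (T' i).
  by apply/matrixP => i j; rewrite !mxE.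
have hD : \det (\matrix_(i < n) eval A B (T' i)) != 0.
  by rewrite -Heq -unitfE -unitmxE.
have hpos : 0 < `|\det (\matrix_(i < n) eval A B (T' i))| by rewrite normr_gt0.
have [d hd Hd] := cont_det A B T' hpos.
exists d; split => // At Bt h1 h2.
apply: (ctrl_of_trees (T := T')) => [i|]; first exact: HT.
apply/eqP => h0; have := Hd At Bt h1 h2; rewrite h0 sub0r normrN ltxx //.
Qed.

Lemma eval_map (R1 R2 : comNzRingType) (phi : {rmorphism R1 -> R2}) k n m
  (A : tensor R1 k n) (B : 'M[R1]_(n, m)) t :
  eval (fun i j => phi (A i j)) (map_mx phi B) t = map_mx phi (eval A B t).
Proof.
elim: t => [i|f IH] /=; first by apply/rowP => c; rewrite !mxE.
apply/rowP => r; rewrite !mxE rmorph_sum; apply: eq_bigr => j _.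
rewrite rmorphM rmorph_prod; congr (_ * _); apply: eq_bigr => l _.
by rewrite IH mxE.
Qed.

Lemma eval_ext (R : comNzRingType) k n m (A A' : tensor R k n) (B B' : 'M[R]_(n, m)) t :
  (forall i j, A i j = A' i j) -> B = B' -> eval A B t = eval A' B' t.
Proof.
move=> HA <-; elim: t => [i|f IH] //=.
apply/rowP => r; rewrite !mxE; apply: eq_bigr => j _; rewrite HA.
by congr (_ * _); apply: eq_bigr => l _; rewrite IH.
Qed.

Section Part2.
Variables (R : realType) (k n m : nat) (hk : (2 <= k)%N) (hm : (0 < m)%N).
Variables (A : tensor R k n) (B : 'M[R]_(n, m)).

Definition i0 := Ordinal hm.

Definition A1 : tensor R k n :=
  fun i j => if [forall l, (j l).+1 == i :> nat] then 1 else 0.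
Definition B1 : 'M[R]_(n, m) :=
  \matrix_(i, c) (if (i == 0 :> nat) && (c == 0 :> nat) then 1 else 0).

Fixpoint tp (p : nat) : tree m k.-1 :=
  match p with 0 => Leaf i0 | p'.+1 => Node (fun _ => tp p') end.

Definition ep (p : nat) : 'rV[R]_n := \row_r (if (r == p :> nat) then 1 else 0).

Lemma dle_tp p : dle (tp p) p.
Proof. by elim: p => //= p IH l. Qed.

Lemma eval_tp p : (p < n)%N -> eval A1 B1 (tp p) = ep p.
Proof.
have hk1 : (0 < k.-1)%N by case: k hk => [|[|k']].
elim: p => [|p IH] hp.
  by apply/rowP => r; rewrite !mxE /= andbT.
rewrite /= (tapp_ext (fun _ => ep p)) => [|l]; last exact: IH (ltnW hp).
apply/rowP => r; rewrite !mxE.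
pose jp : {ffun 'I_k.-1 -> 'I_n} := [ffun _ => Ordinal (ltnW hp)].
rewrite (bigD1 jp) //= [X in _ + X]big1 ?addr0; last first.
  move=> j hj.
  case: (pickP (fun l => val (j l) != p)) => [l hl|hall].
    by rewrite (bigD1 l) //= !mxE (negbTE hl) mul0r mulr0.
  exfalso; move/negP: hj; apply; apply/eqP/ffunP => l; rewrite ffunE.
  by apply: val_inj => /=; have := hall l => /= /negbFE/eqP.
rewrite big1 ?mulr1 => [|l _]; last by rewrite !mxE ffunE /= eqxx.
rewrite /A1.
have -> : [forall l, (jp l).+1 == r :> nat] = (p.+1 == r).
  apply/forallP/idP => [H|H l]; last by rewrite ffunE.
  by have := H (Ordinal hk1); rewrite ffunE.
by rewrite eq_sym.
Qed.

Lemma M1_id : \matrix_(p < n) eval A1 B1 (tp p) = 1%:M.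
Proof.
apply/matrixP => i j; rewrite mxE eval_tp // !mxE.
by rewrite ?val_eqE eq_sym; case: (i == j).
Qed.

Definition AP : tensor {poly R} k n :=
  fun i j => (A i j)%:P + 'X * (A1 i j - A i j)%:P.
Definition BP : 'M[{poly R}]_(n, m) :=
  \matrix_(i, c) ((B i c)%:P + 'X * (B1 i c - B i c)%:P).

Definition pol := \det (\matrix_(p < n) eval AP BP (tp p)).

Lemma Hs s : \det (\matrix_(p < n) eval (fun i j => horner_eval s (AP i j))
                   (map_mx (horner_eval s) BP) (tp p)) = pol.[s].
Proof.
rewrite -horner_evalE /pol -det_map_mx; congr (\det _); apply/matrixP => i j.
by rewrite !mxE eval_map mxE.
Qed.

Lemma pol_neq0 : pol != 0.
Proof.
apply/eqP => h0; have := Hs 1; rewrite h0 horner0.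
rewrite (_ : \matrix_(p < n) _ = \matrix_(p < n) eval A1 B1 (tp p)).
  by rewrite M1_id det1 => /eqP; rewrite oner_eq0.
apply/matrixP => i j; rewrite !mxE; congr (_ 0 j).
have := @eval_ext R k n m (fun i j => horner_eval 1 (AP i j)) A1 (map_mx (horner_eval 1) BP) B1 (tp i).
move=> H; rewrite H //.
  by move=> i' j'; rewrite horner_evalE /AP hornerD hornerM hornerX !hornerC; ring.
by apply/matrixP => i' j'; rewrite !mxE horner_evalE hornerD hornerM hornerX !hornerC; ring.
Qed.

Lemma dist_scaleA s : 0 <= s ->
  tensor_dist (fun i j => horner_eval s (AP i j)) A = s * tensor_dist A1 A.
Proof.
move=> hs; rewrite /tensor_dist.
transitivity (Num.sqrt (s ^+ 2 * \sum_i \sum_j (A1 i j - A i j) ^+ 2)).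
  congr Num.sqrt; rewrite mulr_sumr; apply: eq_bigr => i _; rewrite mulr_sumr.
  by apply: eq_bigr => j _; rewrite horner_evalE /AP hornerD hornerM hornerX !hornerC; ring.
by rewrite sqrtrM ?sqr_ge0 // sqrtr_sqr ger0_norm.
Qed.

Lemma dist_scaleB s : 0 <= s ->
  mx_dist (map_mx (horner_eval s) BP) B = s * mx_dist B1 B.
Proof.
move=> hs; rewrite /mx_dist.
transitivity (Num.sqrt (s ^+ 2 * \sum_(i < n) \sum_(j < m) (B1 i j - B i j) ^+ 2)).
  congr Num.sqrt; rewrite mulr_sumr; apply: eq_bigr => i _; rewrite mulr_sumr.
  by apply: eq_bigr => j _; rewrite !mxE horner_evalE hornerD hornerM hornerX !hornerC; ring.
by rewrite sqrtrM ?sqr_ge0 // sqrtr_sqr ger0_norm.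
Qed.

Lemma part2 eps : 0 < eps ->
  exists (At : tensor R k n) (Bt : 'M[R]_(n, m)),
    [/\ tensor_dist At A < eps, mx_dist Bt B < eps & controllable At Bt].
Proof.
move=> he.
set dA := tensor_dist A1 A; set dB := mx_dist B1 B.
have hdA : 0 <= dA by apply: sqrtr_ge0.
have hdB : 0 <= dB by apply: sqrtr_ge0.
have hD : 0 < dA + dB + 1 by rewrite ltr_pwDr // addr_ge0.
set del := eps / (dA + dB + 1).
have hdel : 0 < del by rewrite divr_gt0.
have hdelE : del * (dA + dB + 1) = eps by rewrite /del divfK // gt_eqF.
set rs := [seq del / (i.+1)%:R | i <- iota 0 (size pol)].
have huniq : uniq rs.
  rewrite map_inj_uniq ?iota_uniq // => i j /(mulfI (negbT (gt_eqF hdel))) /invr_inj /eqP.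
  by rewrite eqr_nat eqSS => /eqP.
have : ~~ all (root pol) rs.
  apply/negP => hall; have := max_poly_roots pol_neq0 hall huniq.
  by rewrite size_map size_iota ltnn.
case/allPn => _ /mapP [i _ ->] hroot.
set s := del / (i.+1)%:R.
have hi : 0 < (i.+1)%:R :> R by rewrite ltr0n.
have hs0 : 0 < s by rewrite divr_gt0.
have hsd : s <= del.
  rewrite ler_pdivrMr // ler_peMr ?(ltW hdel) //.
  by rewrite ler1n.
exists (fun i j => horner_eval s (AP i j)), (map_mx (horner_eval s) BP); split.
- rewrite dist_scaleA ?(ltW hs0) // -/dA; nra.
- rewrite dist_scaleB ?(ltW hs0) // -/dB; nra.
- apply: (ctrl_of_trees (T := fun p : 'I_n => tp p)) => [p|].
    apply: dle_le (dle_tp p); case: n p => [[]|n'] p //=.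
    by rewrite -ltnS.
  by rewrite Hs -rootE.
Qed.

End Part2.

Theorem proposition5 (R : realType) (k n m : nat) (hk : (2 <= k)%N)
  (hkeven : ~~ odd k) (hm : (0 < m)%N)
  (A : tensor R k n) (B : 'M[R]_(n, m)) :
  (controllable A B ->
     exists eps : R, 0 < eps /\
       forall (At : tensor R k n) (Bt : 'M[R]_(n, m)),
         tensor_dist At A < eps -> mx_dist Bt B < eps -> controllable At Bt)
  /\
  (~ controllable A B ->
     forall eps : R, 0 < eps ->
       exists (At : tensor R k n) (Bt : 'M[R]_(n, m)),
         [/\ tensor_dist At A < eps, mx_dist Bt B < eps & controllable At Bt]).
Proof.
split; first exact: part1.
by move=> _ eps he; apply: part2.
Qed.
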